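(* Let $A$ be a $p$-adically separated $\delta$-ring. If $pA$ is a prime ideal of $A$, then $A$ is $p$-torsion-free.
   Context: All rings are commutative $\mathbb{Z}_{(p)}$-algebras. A $\delta$-ring is a ring $A$ with $\delta:A\to A$ satisfying $\delta(0)=\delta(1)=0$, $\delta(a+b)=\delta(a)+\delta(b)+\frac{a^p+b^p-(a+b)^p}{p}$, $\delta(ab)=a^p\delta(b)+b^p\delta(a)+p\delta(a)\delta(b)$. *)

(* Defs.v *)
From HB Require Import structures.
From mathcomp Require Import all_boot all_order all_algebra.
Set Implicit Arguments. Unset Strict Implicit. Unset Printing Implicit Defensive.
Import GRing.Theory.
Local Open Scope ring_scope.

(* A is a Z_(p)-algebra: every integer prime to p is invertible in A. *)
Definition Zp_local_algebra (p : nat) (A : comPzRingType) : Prop :=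
  forall n : nat, coprime n p -> exists y : A, n%:R * y = 1.

(* (a^p + b^p - (a+b)^p)/p, written out as the integral polynomial
   - \sum_{0<i<p} (C(p,i)/p) a^i b^(p-i). *)
Definition delta_add_term (p : nat) (A : comPzRingType) (a b : A) : A :=
  - \sum_(1 <= i < p) (('C(p, i) %/ p)%N)%:R * a ^+ i * b ^+ (p - i).

Definition is_delta_structure (p : nat) (A : comPzRingType) (delta : A -> A) : Prop :=
  [/\ delta 0 = 0, delta 1 = 0,
      forall a b, delta (a + b) = delta a + delta b + delta_add_term p a b
    & forall a b, delta (a * b) =
        a ^+ p * delta b + b ^+ p * delta a + p%:R * delta a * delta b].

Definition in_pA (p : nat) (A : comPzRingType) (x : A) : Prop :=
  exists c : A, x = p%:R * c.

Definition p_adically_separated (p : nat) (A : comPzRingType) : Prop :=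
  forall x : A, (forall n : nat, exists c : A, x = p%:R ^+ n * c) -> x = 0.

Definition pA_prime (p : nat) (A : comPzRingType) : Prop :=
  ~ in_pA p (1 : A) /\
  forall a b : A, in_pA p (a * b) -> in_pA p a \/ in_pA p b.

Definition p_torsion_free (p : nat) (A : comPzRingType) : Prop :=
  forall x : A, p%:R * x = 0 -> x = 0.

(* Main.v *)
Require Import Defs.
From mathcomp Require Import all_boot all_order all_algebra zify.
Set Implicit Arguments. Unset Strict Implicit.
Import GRing.Theory.
From mathcomp Require Import ring.

Lemma binS (p n : nat) : 0 < p ->
  (n.+1)^p = n^p + \sum_(1 <= i < p) 'C(p, i) * n ^ i + 1.
Proof.
move=> p0; rewrite -add1n expnDn -(big_mkord xpredT (fun i => 'C(p, i) * (1 ^ (p - i) * n ^ i))).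
rewrite big_ltn // big_nat_recr //= bin0 binn subnn !exp1n expn0 !mul1n.
under eq_bigr => i _ do rewrite exp1n mul1n.
lia.
Qed.

Lemma Tsum (p n : nat) : 0 < p ->
  \sum_(m < n) \sum_(1 <= i < p) 'C(p, i) * m ^ i + n = n ^ p.
Proof.
move=> p0; elim: n => [|n IH]; first by rewrite big_ord0 exp0n.
rewrite big_ord_recr /= binS // -IH; rewrite -!addnA; congr (_ + _); rewrite addnS -addn1; lia.
Qed.

Lemma Ssum (p : nat) : prime p ->
  \sum_(m < p) \sum_(1 <= i < p) ('C(p, i) %/ p) * m ^ i = p ^ (p - 1) - 1.
Proof.
move=> pp; have p0 := prime_gt0 pp.
have H : p * (\sum_(m < p) \sum_(1 <= i < p) ('C(p, i) %/ p) * m ^ i) = p * (p ^ (p - 1) - 1).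
  rewrite mulnBr muln1 -expnS subn1 prednK // -(Tsum p p0) addnK big_distrr /=.
  apply: eq_bigr => m _; rewrite big_distrr /=; rewrite !big_nat; apply: eq_bigr => i /andP[i1 ip].
  by rewrite mulnA (mulnC p) divnK // prime_dvd_bin // i1 ip.
by apply/eqP; rewrite -(eqn_pmul2l p0) H.
Qed.

Local Open Scope ring_scope.

Lemma delta_nat (p : nat) (A : comPzRingType) (delta : A -> A) :
  is_delta_structure p delta -> forall n : nat,
  delta n%:R = - ((\sum_(m < n) \sum_(1 <= i < p) ('C(p, i) %/ p) * m ^ i)%N)%:R.
Proof.
move=> [d0 d1 dadd dmul]; elim=> [|n IH]; first by rewrite big_ord0 d0 oppr0.
rewrite mulrSr dadd IH d1 big_ord_recr /= natrD opprD addr0; congr (_ + _).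
rewrite /delta_add_term natr_sum; congr (- _); apply: eq_bigr => i _.
by rewrite expr1n mulr1 natrM natrX.
Qed.

Lemma not_dvd (p : nat) : prime p -> coprime (p ^ (p - 1) - 1) p.
Proof.
move=> pp; have p1 := prime_gt1 pp.
rewrite coprime_sym prime_coprime //; apply/negP => H.
have H2 : (p %| p ^ (p - 1))%N by rewrite dvdn_exp // subn_gt0.
have := dvdn_sub H2 H; rewrite subKn ?expn_gt0 ?prime_gt0 // dvdn1 => /eqP E.
by rewrite E in p1.
Qed.

Theorem lemma3p2 (p : nat) (A : comPzRingType) (delta : A -> A) :
  prime p -> Zp_local_algebra p A -> is_delta_structure p delta ->
  p_adically_separated p A -> pA_prime p A -> p_torsion_free p A.
Proof.
move=> pp Hloc Hd Hsep [Hn1 Hprime].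
have Hd' := Hd; case: Hd' => [d0 d1 dadd dmul].
have p0 := prime_gt0 pp; have p1 := prime_gt1 pp.
set P : A := p%:R.
set u : A := 1 - P ^+ (p - 1).
have dP : delta P = u.
  rewrite /P (delta_nat Hd) Ssum // natrB ?expn_gt0 ?p0 // natrX opprB //.
have [v Hv] : exists v : A, u * v = 1.
  have [y Hy] := Hloc _ (not_dvd pp).
  move: Hy; rewrite natrB ?expn_gt0 ?p0 // natrX -/P => Hy.
  exists (- y); rewrite /u -[X in _ = X]Hy; ring.
have eP : P ^+ p = P * P ^+ (p - 1) by rewrite -exprS subn1 prednK.
have dpy : forall y, delta (P * y) = u * y ^+ p + P * delta y.
  move=> y; rewrite dmul dP eP /u; ring.
have E : forall k x, exists s, delta (P ^+ k.+1 * x) = P ^+ k * (u * x ^+ p + P * s).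
  elim=> [|k IH] x.
    by exists (delta x); rewrite expr1 dpy expr0 mul1r.
  have [s Hs] := IH x.
  have le : (k.+2 <= k.+1 * p)%N by rewrite mulnC; nia.
  exists (s + u * P ^+ (k.+1 * p - k.+2) * x ^+ p).
  rewrite exprS -mulrA dpy Hs exprMn -exprM.
  have eX : P ^+ (k.+1 * p) = P * (P * P ^+ k) * P ^+ (k.+1 * p - k.+2) by rewrite -!exprS -exprD subnKC.
  rewrite eX; move: (P ^+ (k.+1 * p - k.+2)) => Q; rewrite exprS; move: (P ^+ k) (x ^+ p) => K X; ring.
have C : forall k x, P ^+ k * x = 0 -> in_pA p x.
  elim=> [|k IH] x Hx.
    by exists 0; rewrite mulr0 -Hx expr0 mul1r.
  have [s Hs] := E k x.
  rewrite Hx d0 in Hs.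
  have [c Hc] := IH _ (esym Hs).
  have Hxp : in_pA p (x ^+ p).
    exists (v * (c - s)).
    have H : u * x ^+ p = P * c - P * s by rewrite -Hc; ring.
    have -> : x ^+ p = v * (u * x ^+ p) by rewrite mulrA (mulrC v) Hv mul1r.
    rewrite H; ring.
  have pw : forall n, in_pA p (x ^+ n.+1) -> in_pA p x.
    elim=> [|n IHn]; first by rewrite expr1.
    by rewrite exprS => /Hprime [//|/IHn].
  by apply: (pw p.-1); rewrite prednK.
move=> x Hx.
have G : forall n, exists c, x = P ^+ n * c /\ P ^+ n.+1 * c = 0.
  elim=> [|n [c [Hc1 Hc2]]].
    by exists x; rewrite expr0 mul1r expr1.
  have [c' Hc'] := C _ _ Hc2.
  exists c'; rewrite Hc1 Hc' exprS (exprS P n.+1); split; first ring.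
  by rewrite -Hc2 Hc'; ring.
apply: Hsep => n; have [c [Hc _]] := G n; by exists c.
Qed.
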